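(* Let $f\colon E\to B$ be a uniformly expansive, homogeneous map of metric spaces. Assume that $B$ has straight finite decomposition complexity and that there exists $b_0\in B$ such that for each $r>0$ the space $f^{-1}(B_r(b_0))$ has straight finite decomposition complexity. Then $E$ has straight finite decomposition complexity. In particular, straight finite decomposition complexity satisfies the Homogeneous Fibering Theorem: if $f\colon E\to B$ is uniformly expansive and homogeneous, $B$ has sFDC, and $f^{-1}(D)$ has sFDC for every bounded $D\subset B$, then $E$ has sFDC.
   Context: $B_r(b_0)$ is the ball of radius $r$ about $b_0$. A map $f\colon X\to Y$ is uniformly expansive if there is a nondecreasing $\rho\colon[0,\infty)\to[0,\infty)$ with $d_Y(f(x),f(x'))\le\rho(d_X(x,x'))$ for all $x,x'$. It is homogeneous if for all $y_1,y_2\in f(X)$ there exist isometries $\phi\colon X\to X$, $\bar\phi\colon Y\to Y$ with $f\circ\phi=\bar\phi\circ f$ and $\bar\phi(y_1)=y_2$. A metric family is a set of metric spaces; it is uniformly bounded if the diameters of its members are uniformly bounded. An $r$-decomposition of a metric space $Z$ over a metric family $\mathcal{Y}$ is a decomposition $Z=Z_0\cup Z_1$ with each $Z_i=\bigsqcup_j Z_{ij}$ a union of pairwise $r$-disjoint subsets ($d(Z_{ij},Z_{ij'})>r$ for $j\neq j'$) and each $Z_{ij}\in\mathcal{Y}$; a family is $r$-decomposable over $\mathcal{Y}$ if each member admits an $r$-decomposition over $\mathcal{Y}$. A metric family $\mathcal{X}$ has straight finite decomposition complexity (sFDC) if for every sequence $R_1<R_2<\cdots$ of positive numbers there exist $n\in\mathbb{N}$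 and families $\mathcal{X}_0=\mathcal{X},\dots,\mathcal{X}_n$ with $\mathcal{X}_i$ $R_{i+1}$-decomposable over $\mathcal{X}_{i+1}$ for $i<n$ and $\mathcal{X}_n$ uniformly bounded. A metric space has sFDC if the family consisting of it alone does. *)

(* Defs.v *)
From Stdlib Require Import Reals.
Open Scope R_scope.

Definition is_metric {T : Type} (d : T -> T -> R) : Prop :=
  (forall x y, 0 <= d x y) /\
  (forall x y, d x y = 0 <-> x = y) /\
  (forall x y, d x y = d y x) /\
  (forall x y z, d x z <= d x y + d y z).

Definition ball {T : Type} (d : T -> T -> R) (b0 : T) (r : R) : T -> Prop :=
  fun b => d b0 b < r.

Definition preimage {A B : Type} (f : A -> B) (D : B -> Prop) : A -> Prop :=
  fun x => D (f x).

Definition bounded_set {T : Type} (d : T -> T -> R) (D : T -> Prop) : Prop :=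
  exists C, forall x y, D x -> D y -> d x y <= C.

Definition uniformly_expansive {X Y : Type} (dX : X -> X -> R) (dY : Y -> Y -> R)
  (f : X -> Y) : Prop :=
  exists rho : R -> R,
    (forall t, 0 <= t -> 0 <= rho t) /\
    (forall s t, 0 <= s -> s <= t -> rho s <= rho t) /\
    (forall x x', dY (f x) (f x') <= rho (dX x x')).

Definition isometry {X : Type} (d : X -> X -> R) (phi : X -> X) : Prop :=
  (forall x y, d (phi x) (phi y) = d x y) /\ (forall y, exists x, phi x = y).

Definition homogeneous {X Y : Type} (dX : X -> X -> R) (dY : Y -> Y -> R)
  (f : X -> Y) : Prop :=
  forall y1 y2 : Y, (exists x1, f x1 = y1) -> (exists x2, f x2 = y2) ->
    exists (phi : X -> X) (phib : Y -> Y),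
      isometry dX phi /\ isometry dY phib /\
      (forall x, f (phi x) = phib (f x)) /\ phib y1 = y2.

Definition family (T : Type) := (T -> Prop) -> Prop.

Definition uniformly_bounded {T : Type} (d : T -> T -> R) (F : family T) : Prop :=
  exists C, forall Y, F Y -> forall x y, Y x -> Y y -> d x y <= C.

(** d(A, B) > r, with the infimum convention d(A, B) = +oo when A or B is empty. *)
Definition r_disjoint {T : Type} (d : T -> T -> R) (r : R) (A B : T -> Prop) : Prop :=
  exists s, r < s /\ forall a b, A a -> B b -> s <= d a b.

Definition r_disjoint_union_over {T : Type} (d : T -> T -> R) (r : R)
  (Y : family T) (Zi : T -> Prop) (P : family T) : Prop :=
  (forall x, Zi x <-> exists A, P A /\ A x) /\
  (forall A, P A -> Y A) /\
  (forall A A', P A -> P A' -> A <> A' -> r_disjoint d r A A').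

Definition r_decomposition {T : Type} (d : T -> T -> R) (r : R)
  (Y : family T) (Z : T -> Prop) : Prop :=
  exists (Z0 Z1 : T -> Prop) (P0 P1 : family T),
    (forall x, Z x <-> Z0 x \/ Z1 x) /\
    r_disjoint_union_over d r Y Z0 P0 /\
    r_disjoint_union_over d r Y Z1 P1.

Definition r_decomposable {T : Type} (d : T -> T -> R) (r : R)
  (X Y : family T) : Prop :=
  forall Z, X Z -> r_decomposition d r Y Z.

(** Straight finite decomposition complexity; R_ i plays the role of R_{i+1}. *)
Definition sFDC_family {T : Type} (d : T -> T -> R) (X : family T) : Prop :=
  forall R_ : nat -> R, (forall i, 0 < R_ i) -> (forall i, R_ i < R_ (S i)) ->
  exists (n : nat) (F : nat -> family T),
    F 0%nat = X /\
    (forall i, (i < n)%nat -> r_decomposable d (R_ i) (F i) (F (S i))) /\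
    uniformly_bounded d (F n).

Definition sFDC_subspace {T : Type} (d : T -> T -> R) (S : T -> Prop) : Prop :=
  sFDC_family d (fun Z => Z = S).

Definition sFDC {T : Type} (d : T -> T -> R) : Prop :=
  sFDC_subspace d (fun _ => True).

(* Main.v *)
Require Import Defs.
From Stdlib Require Import Reals.
From Stdlib Require Import Lra Lia Classical FunctionalExtensionality PropExtensionality.
Open Scope R_scope.

Definition subfam {T : Type} (d : T -> T -> R) (Y : Defs.family T) : Defs.family T :=
  fun A' => exists A (g : T -> T), Y A /\ (forall x y, d (g x) (g y) = d x y) /\
    (forall x, A' x -> A (g x)).

Definition restr {T : Type} (A' : T -> Prop) (g : T -> T) (P : Defs.family T) : Defs.family T :=
  fun B => exists C, P C /\ B = (fun x => A' x /\ C (g x)).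

Lemma union_restr {T : Type} (d : T -> T -> R) r Y' Zi P (A' : T -> Prop) g :
  (forall x y, d (g x) (g y) = d x y) ->
  r_disjoint_union_over d r Y' Zi P ->
  r_disjoint_union_over d r (subfam d Y') (fun x => A' x /\ Zi (g x)) (restr A' g P).
Proof.
  intros Hg [Hu [Hin Hdis]]. split; [|split].
  - intros x; split.
    + intros [HA HZ]. apply Hu in HZ. destruct HZ as [C [HC HCx]].
      exists (fun x => A' x /\ C (g x)). split; [exists C; auto | auto].
    + intros [B [[C [HC ->]] [HA HCx]]]. split; auto. apply Hu. exists C; auto.
  - intros B [C [HC ->]]. exists C, g. repeat split; auto. intros x [_ H]; exact H.
  - intros B B' [C [HC ->]] [C' [HC' ->]] Hne.
    assert (C <> C') by (intro; subst; apply Hne; reflexivity).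
    destruct (Hdis C C' HC HC' H) as [s [Hs Hs']].
    exists s; split; auto. intros a b [_ Ha] [_ Hb]. rewrite <- Hg. auto.
Qed.

Lemma step_subfam {T : Type} (d : T -> T -> R) r Y Y' :
  r_decomposable d r Y Y' -> forall A', subfam d Y A' -> r_decomposition d r (subfam d Y') A'.
Proof.
  intros Hdec A' [A [g [HA [Hg Hsub]]]].
  destruct (Hdec A HA) as [Z0 [Z1 [P0 [P1 [Hu [H0 H1]]]]]].
  exists (fun x => A' x /\ Z0 (g x)), (fun x => A' x /\ Z1 (g x)), (restr A' g P0), (restr A' g P1).
  split; [|split; apply union_restr; auto].
  intros x; split.
  - intros Hx. pose proof (Hsub x Hx) as HAx. apply Hu in HAx. tauto.
  - intros [[Hx _]|[Hx _]]; exact Hx.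
Qed.

Lemma ub_subfam {T : Type} (d : T -> T -> R) Y Y'' :
  uniformly_bounded d Y -> (forall A', Y'' A' -> subfam d Y A') -> uniformly_bounded d Y''.
Proof.
  intros [C HC] Hs. exists C. intros A' HA' x y Hx Hy.
  destruct (Hs A' HA') as [A [g [HA [Hg Hsub]]]]. rewrite <- Hg. apply (HC A); auto.
Qed.

Lemma sFDC_subiso {T : Type} (d : T -> T -> R) X X' :
  sFDC_family d X -> (forall Z', X' Z' -> subfam d X Z') -> sFDC_family d X'.
Proof.
  intros HX Hs R_ Hpos Hinc.
  destruct (HX R_ Hpos Hinc) as [n [F [F0 [Hdec Hub]]]].
  exists n, (fun i => match i with O => X' | S j => subfam d (F (S j)) end).
  assert (Hmem : forall i A', (match i with O => X' | S j => subfam d (F (S j)) end) A' ->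
     subfam d (F i) A').
  { intros [|i] A' H; [rewrite F0; auto | exact H]. }
  split; [reflexivity|split].
  - intros i Hi A' HA'. apply (step_subfam d (R_ i) (F i) (F (S i))); auto.
  - apply (ub_subfam d (F n)); auto.
Qed.

Lemma sFDC_empty {T : Type} (d : T -> T -> R) : (T -> False) -> sFDC d.
Proof.
  intros HE R_ _ _. exists 0%nat, (fun _ => fun Z => Z = fun _ => True).
  split; [reflexivity|split; [intros; lia|]].
  exists 0. intros. exfalso; auto.
Qed.

Definition pull {E B : Type} (f : E -> B) (Y : Defs.family B) : Defs.family E :=
  fun Z => exists D, Y D /\ Z = preimage f D.

Lemma pull_union {E B : Type} (dE : E -> E -> R) (dB : B -> B -> R) f rho r s Y Zi P :
  (forall x y, 0 <= dE x y) ->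
  (forall s t, 0 <= s -> s <= t -> rho s <= rho t) ->
  (forall x x', dB (f x) (f x') <= rho (dE x x')) ->
  rho (r + 1) < s ->
  r_disjoint_union_over dB s Y Zi P ->
  r_disjoint_union_over dE r (pull f Y) (preimage f Zi) (pull f P).
Proof.
  intros Hnn Hrm Hrf Hrs [Hu [Hin Hdis]]. split; [|split].
  - intros x; unfold preimage; split.
    + intros HZ. apply Hu in HZ. destruct HZ as [C [HC HCx]].
      exists (preimage f C). split; [exists C; auto | exact HCx].
    + intros [A [[C [HC ->]] HCx]]. apply Hu. exists C; auto.
  - intros A [C [HC ->]]. exists C; auto.
  - intros A A' [C [HC ->]] [C' [HC' ->]] Hne.
    assert (C <> C') by (intro; subst; apply Hne; reflexivity).
    destruct (Hdis C C' HC HC' H) as [s' [Hs Hs']].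
    exists (r + 1); split; [lra|]. intros a b Ha Hb.
    destruct (Rle_or_lt (r+1) (dE a b)) as [Hl|Hl]; auto.
    exfalso. pose proof (Hs' _ _ Ha Hb). pose proof (Hrf a b).
    pose proof (Hrm (dE a b) (r+1) (Hnn a b) (Rlt_le _ _ Hl)). lra.
Qed.

Lemma pull_dec {E B : Type} (dE : E -> E -> R) (dB : B -> B -> R) f rho r s Y Y' :
  (forall x y, 0 <= dE x y) ->
  (forall s t, 0 <= s -> s <= t -> rho s <= rho t) ->
  (forall x x', dB (f x) (f x') <= rho (dE x x')) ->
  rho (r + 1) < s ->
  r_decomposable dB s Y Y' -> r_decomposable dE r (pull f Y) (pull f Y').
Proof.
  intros Hnn Hrm Hrf Hrs Hdec Z [D [HD ->]].
  destruct (Hdec D HD) as [Z0 [Z1 [P0 [P1 [Hu [H0 H1]]]]]].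
  exists (preimage f Z0), (preimage f Z1), (pull f P0), (pull f P1).
  split; [|split; eapply pull_union; eauto].
  intros x; unfold preimage; apply Hu.
Qed.

Lemma part1 (E B : Type) (dE : E -> E -> R) (dB : B -> B -> R) (f : E -> B) :
  is_metric dE -> is_metric dB ->
  uniformly_expansive dE dB f -> homogeneous dE dB f ->
  sFDC dB ->
  (exists b0 : B, forall r, 0 < r -> sFDC_subspace dE (preimage f (ball dB b0 r))) ->
  sFDC dE.
Proof.
  intros [Enn _] [Bnn [_ [Bsym Btri]]] [rho [Hr0 [Hrm Hrf]]] Hhom HB [b0 Hb0].
  destruct (classic (exists e0 : E, True)) as [[e0 _]|HE].
  2:{ apply sFDC_empty. intro e; apply HE; exists e; auto. }
  intros R_ Hpos Hinc.
  destruct (HB (fun i => rho (R_ i + 1) + R_ i + 1)) as [n [FB [FB0 [FBdec [C HC]]]]].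
  { intros i. pose proof (Hr0 (R_ i + 1)). pose proof (Hpos i). 
    assert (0 <= R_ i + 1) by lra. specialize (H H1). lra. }
  { intros i. pose proof (Hpos i). pose proof (Hinc i).
    pose proof (Hrm (R_ i + 1) (R_ (S i) + 1)). 
    assert (rho (R_ i + 1) <= rho (R_ (S i) + 1)) by (apply H1; lra). lra. }
  set (b1 := f e0). set (r := dB b0 b1 + Rabs C + 1).
  assert (Hr : 0 < r). { unfold r. pose proof (Bnn b0 b1). pose proof (Rabs_pos C). lra. }
  assert (HX' : sFDC_family dE (pull f (FB n))).
  { apply sFDC_subiso with (X := fun Z => Z = preimage f (ball dB b0 r)); [apply Hb0; lra|].
    intros Z' [D [HD ->]].
    destruct (classic (exists x1, D (f x1))) as [[x1 Hx1]|Hno].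
    - destruct (Hhom (f x1) b1 (ex_intro _ x1 eq_refl) (ex_intro _ e0 eq_refl))
        as [phi [phib [[Hphi _] [[Hphib _] [Hcomm Hb]]]]].
      exists (preimage f (ball dB b0 r)), phi. split; [reflexivity|split;[exact Hphi|]].
      intros x Hx. unfold preimage, ball. rewrite Hcomm.
      assert (E1 : dB b1 (phib (f x)) <= C).
      { rewrite <- Hb, Hphib. apply (HC D HD); auto. }
      pose proof (Btri b0 b1 (phib (f x))). pose proof (Rle_abs C). unfold r. lra.
    - exists (preimage f (ball dB b0 r)), (fun x => x). split; [reflexivity|split;[auto|]].
      intros x Hx. exfalso. apply Hno. exists x. exact Hx. }
  destruct (HX' (fun j => R_ (n + j)%nat)) as [m [G [G0 [Gdec Gub]]]].
  { intros; apply Hpos. }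
  { intros; replace (n + S i)%nat with (S (n + i)) by lia; apply Hinc. }
  exists (n + m)%nat, (fun i => if Nat.ltb i n then pull f (FB i) else G (i - n)%nat).
  split; [|split].
  - assert (P0 : pull f (FB 0%nat) = fun Z => Z = fun _ : E => True).
    { rewrite FB0. apply functional_extensionality; intro Z.
      apply propositional_extensionality. split.
      - intros [D [HD ->]]. subst D. reflexivity.
      - intros ->. exists (fun _ => True). split; reflexivity. }
    cbv beta. destruct (Nat.ltb_spec 0 n); [exact P0|].
    replace (0 - n)%nat with 0%nat by lia. rewrite G0.
    replace n with 0%nat by lia. exact P0.
  - intros i Hi. cbv beta. destruct (Nat.ltb_spec i n).
    + assert (Hs : (if Nat.ltb (S i) n then pull f (FB (S i)) else G (S i - n)%nat)
                   = pull f (FB (S i))).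
      { destruct (Nat.ltb_spec (S i) n); [reflexivity|].
        replace (S i - n)%nat with 0%nat by lia. rewrite G0.
        replace n with (S i) by lia. reflexivity. }
      rewrite Hs. apply (pull_dec dE dB f rho (R_ i) (rho (R_ i + 1) + R_ i + 1)); auto.
      pose proof (Hpos i). lra.
    + destruct (Nat.ltb_spec (S i) n); [lia|].
      replace (S i - n)%nat with (S (i - n)) by lia.
      pose proof (Gdec (i - n)%nat ltac:(lia)) as Hd. cbv beta in Hd.
      replace (n + (i - n))%nat with i in Hd by lia. exact Hd.
  - cbv beta. destruct (Nat.ltb_spec (n + m) n); [lia|].
    replace (n + m - n)%nat with m by lia. exact Gub.
Qed.

Theorem theorem5p3 (E B : Type) (dE : E -> E -> R) (dB : B -> B -> R)
  (f : E -> B) :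
  is_metric dE -> is_metric dB ->
  uniformly_expansive dE dB f -> homogeneous dE dB f ->
  (sFDC dB ->
   (exists b0 : B, forall r, 0 < r -> sFDC_subspace dE (preimage f (ball dB b0 r))) ->
   sFDC dE) /\
  (sFDC dB ->
   (forall D : B -> Prop, bounded_set dB D -> sFDC_subspace dE (preimage f D)) ->
   sFDC dE).
Proof.
  intros mE mB Hue Hhom. split.
  - apply part1; auto.
  - intros HB Hbd. destruct (classic (inhabited B)) as [[b0]|HnB].
    + apply (part1 E B dE dB f); auto. exists b0. intros r Hr. apply Hbd.
      destruct mB as [_ [_ [Bsym Btri]]].
      exists (2 * r). intros x y Hx Hy. unfold ball in *.
      pose proof (Btri x b0 y). rewrite (Bsym x b0) in H. lra.
    + apply sFDC_empty. intro e. apply HnB. exact (inhabits (f e)).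
Qed.
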